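(* Let $G\subseteq\mathrm{O}_n(\mathbb{R})$ be a finite group with fundamental invariants $\pi_1,\dots,\pi_m$, Hilbert map $\Pi=(\pi_1,\dots,\pi_m)$ and matrix $M_\Pi=(\langle d\pi_i,d\pi_j\rangle)_{1\le i,j\le m}$. The following are equivalent: (i) $\Pi(\mathbb{R}^n)=\{z\in V_{\mathbb{R}}(I_\Pi) \mid \phi_z(M_\Pi)\text{ is positive semi-definite}\}$. (ii) For every ring homomorphism $\phi:\mathbb{R}[\underline{X}]^G\to\mathbb{R}$: $\phi$ extends to a ring homomorphism $\tilde\phi:\mathbb{R}[\underline{X}]\to\mathbb{R}$ if and only if $\phi(\langle df,df\rangle)\ge0$ for all $f\in\mathbb{R}[\underline{X}]^G$.
   Context: $\mathbb{R}[\underline{X}]=\mathbb{R}[X_1,\dots,X_n]$ and $\mathbb{R}[\underline{X}]^G=\mathbb{R}[\pi_1,\dots,\pi_m]$. For polynomials $p,q$, $\langle dp,dq\rangle=\sum_{j=1}^n\frac{\partial p}{\partial X_j}\frac{\partial q}{\partial X_j}$; for $G$-invariant $p,q$ this is $G$-invariant, so $M_\Pi$ has entries in $\mathbb{R}[\underline{X}]^G$. $I_\Pi$ is the ideal of relations among $\pi_1,\dots,\pi_m$, $V_{\mathbb{R}}(I_\Pi)\subseteq\mathbb{R}^m$ its real zero set, and for $z\in V_{\mathbb{R}}(I_\Pi)$, $\phi_z:\mathbb{R}[\underline{X}]^G\to\mathbb{R}$ is $g(\pi_1,\dots,\pi_m)\mapsto g(z)$, applied entrywise to matrices. *)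

(* Defs.v *)
From HB Require Import structures.
From mathcomp Require Import all_boot all_order all_algebra.
From mathcomp Require Import reals.
From mathcomp Require Import mpoly.
From Stdlib Require Import ClassicalEpsilon.

Set Implicit Arguments.
Unset Strict Implicit.
Unset Printing Implicit Defensive.
Import Order.TTheory GRing.Theory Num.Theory.
Local Open Scope ring_scope.

Section Defs.
Variable R : realType.

Definition finite_orthogonal_group (n : nat) (G : seq 'M[R]_n) : Prop :=
  [/\ 1%:M \in G,
      (forall A B, A \in G -> B \in G -> A *m B \in G),
      (forall A, A \in G -> A^T \in G) &
      (forall A, A \in G -> A *m A^T = 1%:M)].

Definition mat_act (n : nat) (A : 'M[R]_n) (p : {mpoly R[n]}) : {mpoly R[n]} :=
  p \mPo [tuple \sum_(j < n) A i j *: 'X_j | i < n].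

Definition G_invariant (n : nat) (G : seq 'M[R]_n) (p : {mpoly R[n]}) : Prop :=
  forall A, A \in G -> mat_act A p = p.

Definition pitup (n m : nat) (pi : 'I_m -> {mpoly R[n]}) : m.-tuple {mpoly R[n]} :=
  [tuple pi i | i < m].

(* pi_1..pi_m is a minimal homogeneous generating set of R[X]^G *)
Definition fundamental_invariants (n m : nat) (G : seq 'M[R]_n)
    (pi : 'I_m -> {mpoly R[n]}) : Prop :=
  [/\ (forall i, G_invariant G (pi i)),
      (forall i, exists d : nat, pi i \is d.-homog),
      (forall f, G_invariant G f -> exists g : {mpoly R[m]}, f = g \mPo pitup pi) &
      (forall i, ~ exists g : {mpoly R[m]},
            (forall mm, mm \in msupp g -> mm i = 0%N) /\ pi i = g \mPo pitup pi)].

Definition dprod (n : nat) (p q : {mpoly R[n]}) : {mpoly R[n]} :=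
  \sum_(j < n) mderiv j p * mderiv j q.

Definition MPi (n m : nat) (pi : 'I_m -> {mpoly R[n]}) : 'M[{mpoly R[n]}]_m :=
  \matrix_(i, j) dprod (pi i) (pi j).

Definition in_VR_IPi (n m : nat) (pi : 'I_m -> {mpoly R[n]}) (z : 'I_m -> R) : Prop :=
  forall g : {mpoly R[m]}, g \mPo pitup pi = 0 -> g.@[z] = 0.

(* phi_z : g(pi) |-> g(z), using a chosen representative g *)
Definition inv_repr (n m : nat) (pi : 'I_m -> {mpoly R[n]}) (f : {mpoly R[n]})
  : {mpoly R[m]} :=
  epsilon (inhabits 0) (fun g : {mpoly R[m]} => g \mPo pitup pi = f).

Definition phi_z (n m : nat) (pi : 'I_m -> {mpoly R[n]}) (z : 'I_m -> R)
    (f : {mpoly R[n]}) : R :=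
  (inv_repr pi f).@[z].

Definition psd (m : nat) (S : 'M[R]_m) : Prop :=
  forall v : 'cV[R]_m, 0 <= (v^T *m S *m v) 0 0.

Definition hilbert_map (n m : nat) (pi : 'I_m -> {mpoly R[n]}) (x : 'I_n -> R)
  : 'I_m -> R := fun i => (pi i).@[x].

(* phi is a ring homomorphism R[X]^G -> R (values off R[X]^G are irrelevant) *)
Definition inv_ring_hom (n : nat) (G : seq 'M[R]_n) (phi : {mpoly R[n]} -> R) : Prop :=
  [/\ phi 1 = 1,
      (forall f g, G_invariant G f -> G_invariant G g -> phi (f + g) = phi f + phi g) &
      (forall f g, G_invariant G f -> G_invariant G g -> phi (f * g) = phi f * phi g)].

End Defs.

(* Main.v *)
Require Import Defs.
From HB Require Import structures.
From mathcomp Require Import all_boot all_order all_algebra.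
From mathcomp Require Import reals.
From mathcomp Require Import mpoly.
From mathcomp Require Import lra.
From Stdlib Require Import ClassicalEpsilon.
Set Implicit Arguments.
Unset Strict Implicit.
Unset Printing Implicit Defensive.
Import Order.TTheory GRing.Theory Num.Theory.
Local Open Scope ring_scope.
Lemma ringhom_id (R : realType) (s : R -> R) : s 1 = 1 ->
  (forall x y, s (x + y) = s x + s y) -> (forall x y, s (x * y) = s x * s y) ->
  forall x, s x = x.
Proof.
move=> s1 sD sM.
have s0 : s 0 = 0.
  have h := sD 0 0; rewrite addr0 in h.
  by apply: (addrI (s 0)); rewrite addr0 -h.
have sN x : s (- x) = - s x.
  by apply: (addrI (s x)); rewrite -sD !subrr s0.
have sB x y : s (x - y) = s x - s y by rewrite sD sN.
have snat k : s k%:R = k%:R.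
  by elim: k => [|k IH]; rewrite ?s0 // -addn1 natrD sD IH s1.
have sint (k : int) : s k%:~R = k%:~R.
  by case: k => k; rewrite ?NegzE ?mulrNz ?sN snat.
have spos x : 0 <= x -> 0 <= s x.
  move=> x0; rewrite -(sqr_sqrtr x0) expr2 sM -expr2; exact: sqr_ge0.
have smono x y : x <= y -> s x <= s y.
  by move=> xy; rewrite -subr_ge0 -sB; apply: spos; rewrite subr_ge0.
have sfrac (k : int) (N : nat) : (0 < N)%N -> s (k%:~R / N%:R) = k%:~R / N%:R.
  move=> N0; have NR : (N%:R : R) != 0 by rewrite pnatr_eq0 -lt0n.
  have := sint k; rewrite -{1}(mulfVK NR (k%:~R)) sM snat => h.
  by apply: (mulIf NR); rewrite h mulfVK.
have half x : s x <= x.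
  rewrite leNgt; apply/negP; move=> xs.
  pose d := s x - x.
  have d0 : 0 < d by rewrite subr_gt0.
  pose N := Num.Def.archi_bound (d^-1).
  have hN : d^-1 < N%:R by apply: archi_boundP; rewrite invr_ge0 ltW.
  have N0 : (0 < N)%N.
    by rewrite -(ltr0n R); apply: lt_trans hN; rewrite invr_gt0.
  pose k := Num.Def.floor (N%:R * x) + 1.
  have h1 : N%:R * x < k%:~R by rewrite -floor_lt_int ltrDl.
  have h2 : k%:~R <= N%:R * x + 1.
    by rewrite /k intrD lerD2r floor_le.
  have NR : (0 : R) < N%:R by rewrite ltr0n.
  have q1 : x < k%:~R / N%:R by rewrite ltr_pdivlMr // mulrC.
  have q2 : k%:~R / N%:R < s x.
    rewrite ltr_pdivrMr // (le_lt_trans h2) // mulrC.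
    have : 1 < d * N%:R by rewrite -ltr_pdivrMl // mulr1.
    rewrite /d mulrBl; lra.
  have := smono _ _ (ltW q1); rewrite sfrac // => h.
  by move: (lt_le_trans q2 h); rewrite ltxx.
move=> x; apply/eqP; rewrite eq_le half /=.
by have := half (- x); rewrite sN lerN2.
Qed.

Section Gen.
Variable R : realType.

Lemma mpoly_ring_ind (k : nat) (P : {mpoly R[k]} -> Prop) :
  (forall c, P c%:MP) -> (forall i, P 'X_i) ->
  (forall p q, P p -> P q -> P (p + q)) ->
  (forall p q, P p -> P q -> P (p * q)) -> forall p, P p.
Proof.
move=> hC hX hD hM p; rewrite (mpolyE p).
have h0 : P 0 by rewrite -mpolyC0.
apply: big_ind; [exact: h0 | exact: hD | move=> mm _].
rewrite -mul_mpolyC; apply: (hM) => //.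
rewrite mpolyXE_id; apply: big_ind; [by rewrite -mpolyC1 | exact: hM | move=> i _]. have hpow : forall e, P ('X_i ^+ e).
  by elim=> [|e IH]; [rewrite expr0 -mpolyC1 | rewrite exprS; apply: (hM)].
exact: hpow.
Qed.

Lemma mderivXU (k : nat) (l j : 'I_k) :
  mderiv l ('X_j : {mpoly R[k]}) = ((j == l)%:R)%:MP.
Proof.
rewrite mderivX mnm1E; case: eqP => [->|_].
  have -> : (U_(l) - U_(l) = 0)%MM.
    by apply/mnmP => i; rewrite mnmBE mnm0E subnn.
  by rewrite mpolyX0 scale1r mpolyC1.
by rewrite scale0r mpolyC0.
Qed.

Lemma chain (k n : nat) (t : k.-tuple {mpoly R[n]}) (g : {mpoly R[k]}) (j : 'I_n) :
  mderiv j (g \mPo t) = \sum_(i < k) (mderiv i g \mPo t) * mderiv j (tnth t i).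
Proof.
elim/mpoly_ring_ind: g.
- move=> c; rewrite comp_mpolyC mderivC big1 // => i _.
  by rewrite mderivC comp_mpoly0 mul0r.
- move=> i; rewrite comp_mpolyXU (bigD1 i) //= mderivXU eqxx comp_mpolyC mpolyC1 mul1r.
  rewrite big1 ?addr0; first by rewrite (tnth_nth 0).
  by move=> l /negbTE hl; rewrite mderivXU eq_sym hl mpolyC0 comp_mpoly0 mul0r.
- move=> p q hp hq; rewrite comp_mpolyD mderivD hp hq -big_split /=.
  by apply: eq_bigr => i _; rewrite mderivD comp_mpolyD mulrDl.
- move=> p q hp hq; rewrite rmorphM /= mderivM hp hq mulr_suml mulr_sumr -big_split /=.
  apply: eq_bigr => i _; rewrite mderivM comp_mpolyD !rmorphM /=.
  by rewrite mulrDl; congr (_ + _); rewrite -!mulrA; congr (_ * _); rewrite mulrC.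
Qed.

Lemma dprod_comp (k n : nat) (t : k.-tuple {mpoly R[n]}) (g h : {mpoly R[k]}) :
  dprod (g \mPo t) (h \mPo t) = \sum_(i < k) \sum_(j < k)
    ((mderiv i g \mPo t) * (mderiv j h \mPo t)) * dprod (tnth t i) (tnth t j).
Proof.
rewrite /dprod.
under eq_bigr => l _ do rewrite !chain big_distrlr /=.
rewrite exchange_big /=; apply: eq_bigr => i _.
rewrite exchange_big /=; apply: eq_bigr => j _.
rewrite mulr_sumr; apply: eq_bigr => l _.
by rewrite -!mulrA; congr (_ * _); rewrite mulrCA.
Qed.

Lemma mderiv_lin (n : nat) (c : 'I_n -> R) (l : 'I_n) :
  mderiv l (\sum_(j < n) c j *: ('X_j : {mpoly R[n]})) = (c l)%:MP.
Proof.
rewrite raddf_sum (bigD1 l) //= big1 ?addr0.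
  by rewrite mderivZ mderivXU eqxx mpolyC1 -mul_mpolyC mulr1.
by move=> j /negbTE hj; rewrite mderivZ mderivXU hj mpolyC0 scaler0.
Qed.

Lemma dprod_tA (n : nat) (A : 'M[R]_n) (i j : 'I_n) :
  dprod (tnth [tuple \sum_(l < n) A i0 l *: ('X_l : {mpoly R[n]}) | i0 < n] i)
        (tnth [tuple \sum_(l < n) A i0 l *: ('X_l : {mpoly R[n]}) | i0 < n] j)
  = ((A *m A^T) i j)%:MP.
Proof.
rewrite /dprod !tnth_mktuple.
under eq_bigr => l _ do rewrite !mderiv_lin -rmorphM.
rewrite -rmorph_sum /= mxE; congr (_%:MP); apply: eq_bigr => l _; by rewrite mxE.
Qed.

Lemma mat_act_dprod (n : nat) (A : 'M[R]_n) (p q : {mpoly R[n]}) :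
  A *m A^T = 1%:M ->
  mat_act A (dprod p q) = dprod (mat_act A p) (mat_act A q).
Proof.
move=> hA; rewrite /mat_act dprod_comp.
under eq_bigr => i _ do under eq_bigr => j _ do rewrite dprod_tA hA mxE.
rewrite /dprod rmorph_sum /=; apply: eq_bigr => i _.
rewrite (bigD1 i) //= [X in _ + X]big1 ?addr0.
  by rewrite eqxx mpolyC1 mulr1 rmorphM.
by move=> j /negbTE hj; rewrite eq_sym hj mpolyC0 mulr0.
Qed.

Section Main.
Variables (n m : nat) (G : seq 'M[R]_n) (pi : 'I_m -> {mpoly R[n]}).
Hypotheses (HG : finite_orthogonal_group G) (Hpi : fundamental_invariants G pi).

Lemma compX i : 'X_i \mPo pitup pi = pi i.
Proof. by rewrite comp_mpolyXU -(tnth_nth 0) /pitup tnth_mktuple. Qed.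

Lemma invC c : G_invariant G c%:MP.
Proof. by move=> A _; rewrite /mat_act comp_mpolyC. Qed.

Lemma invD f g : G_invariant G f -> G_invariant G g -> G_invariant G (f + g).
Proof. by move=> hf hg A hA; rewrite /mat_act comp_mpolyD -!/(mat_act _ _) hf ?hg. Qed.

Lemma invM f g : G_invariant G f -> G_invariant G g -> G_invariant G (f * g).
Proof. by move=> hf hg A hA; rewrite /mat_act rmorphM /= -!/(mat_act _ _) hf ?hg. Qed.

Lemma inv_comp g : G_invariant G (g \mPo pitup pi).
Proof.
case: Hpi => Hinv _ _ _.
elim/mpoly_ring_ind: g.
- by move=> c; rewrite comp_mpolyC; apply: invC.
- by move=> i; rewrite compX.
- by move=> p q hp hq; rewrite comp_mpolyD; apply: invD.
- by move=> p q hp hq; rewrite rmorphM; apply: invM.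
Qed.

Lemma inv_dprod f g : G_invariant G f -> G_invariant G g -> G_invariant G (dprod f g).
Proof.
case: HG => _ _ _ Horth.
by move=> hf hg A hA; rewrite mat_act_dprod ?Horth // hf ?hg.
Qed.

Lemma phiC phi : inv_ring_hom G phi -> forall c, phi c%:MP = c.
Proof.
case=> h1 hD hM; apply: (@ringhom_id R (fun c => phi c%:MP)).
- by rewrite mpolyC1.
- by move=> x y; rewrite mpolyCD hD //; apply: invC.
- by move=> x y; rewrite rmorphM hM //; apply: invC.
Qed.

Lemma phi_sum phi (k : nat) (F : 'I_k -> {mpoly R[n]}) :
  inv_ring_hom G phi -> (forall i, G_invariant G (F i)) ->
  phi (\sum_(i < k) F i) = \sum_(i < k) phi (F i).
Proof.
move=> hphi hF.
have := hphi; case=> _ hD _.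
pose P (a : {mpoly R[n]}) (b : R) := G_invariant G a /\ phi a = b.
suff : P (\sum_(i < k) F i) (\sum_(i < k) phi (F i)) by case.
apply: (big_ind2 P).
- by split; [rewrite -mpolyC0; apply: invC | rewrite -mpolyC0 (phiC hphi)].
- by move=> a1 b1 a2 b2 [i1 e1] [i2 e2]; split; [apply: invD | rewrite hD // e1 e2].
- by move=> i _; split.
Qed.

Lemma phi_comp phi : inv_ring_hom G phi ->
  forall g, phi (g \mPo pitup pi) = g.@[fun i => phi (pi i)].
Proof.
move=> hphi; have := hphi; case=> _ hD hM.
elim/mpoly_ring_ind.
- by move=> c; rewrite comp_mpolyC mevalC (phiC hphi).
- by move=> i; rewrite compX mevalXU.
- move=> p q hp hq; rewrite comp_mpolyD hD; [by rewrite hp hq mevalD | exact: inv_comp | exact: inv_comp].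
- move=> p q hp hq; rewrite rmorphM /= hM; [by rewrite hp hq mevalM | exact: inv_comp | exact: inv_comp].
Qed.

Lemma psi_eval (psi : {rmorphism {mpoly R[n]} -> R}) p :
  psi p = p.@[fun j => psi 'X_j].
Proof.
have hC c : psi c%:MP = c.
  apply: (@ringhom_id R (fun c => psi c%:MP)).
  - by rewrite mpolyC1 rmorph1.
  - by move=> x y; rewrite mpolyCD rmorphD.
  - by move=> x y; rewrite !rmorphM.
elim/mpoly_ring_ind: p.
- by move=> c; rewrite hC mevalC.
- by move=> i; rewrite mevalXU.
- by move=> p q hp hq; rewrite rmorphD hp hq mevalD.
- by move=> p q hp hq; rewrite rmorphM /= hp hq mevalM.
Qed.

Lemma phiz_eq z : in_VR_IPi pi z -> forall h, phi_z pi z (h \mPo pitup pi) = h.@[z].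
Proof.
move=> hz h; rewrite /phi_z /inv_repr.
set P := fun g : {mpoly R[m]} => g \mPo pitup pi = h \mPo pitup pi.
have := epsilon_spec (inhabits 0) P (ex_intro _ h erefl).
set e := epsilon _ _ => he.
apply/eqP; rewrite -subr_eq0 -mevalB; apply/eqP; apply: hz.
by rewrite comp_mpolyB he subrr.
Qed.

Lemma invS (k : nat) (F : 'I_k -> {mpoly R[n]}) :
  (forall i, G_invariant G (F i)) -> G_invariant G (\sum_(i < k) F i).
Proof.
move=> hF; apply: big_ind => //; last by move=> a b; apply: invD.
by rewrite -mpolyC0; apply: invC.
Qed.

Lemma quadform phi : inv_ring_hom G phi -> forall g : {mpoly R[m]},
  phi (dprod (g \mPo pitup pi) (g \mPo pitup pi)) =
  let w := \col_i (mderiv i g).@[fun i => phi (pi i)] in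
  ((w^T *m map_mx phi (MPi pi) *m w) 0 0).
Proof.
move=> hphi g; have := hphi; case=> _ hD hM.
have hT : forall i j, G_invariant G (((mderiv i g \mPo pitup pi) * (mderiv j g \mPo pitup pi))
     * dprod (tnth (pitup pi) i) (tnth (pitup pi) j)).
  move=> i j; apply: invM; first by apply: invM; apply: inv_comp.
  by rewrite !tnth_mktuple; apply: inv_dprod; case: Hpi.
rewrite dprod_comp phi_sum //; last by move=> i; apply: invS => j; apply: hT.
rewrite /= mxE; under [RHS]eq_bigr => j _ do rewrite mxE mulr_suml.
rewrite exchange_big /=; apply: eq_bigr => i _.
rewrite phi_sum //; apply: eq_bigr => j _.
rewrite hM; last 2 first.
- by apply: invM; apply: inv_comp.
- by rewrite !tnth_mktuple; apply: inv_dprod; case: Hpi.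
rewrite hM; [|exact: inv_comp|exact: inv_comp].
rewrite !phi_comp // !mxE !tnth_mktuple.
by rewrite mulrAC.
Qed.

Lemma lin_w (v : 'cV[R]_m) (z : 'I_m -> R) :
  \col_i (mderiv i (\sum_(j < m) v j 0 *: ('X_j : {mpoly R[m]}))).@[z] = v.
Proof. by apply/matrixP => i j; rewrite !mxE mderiv_lin mevalC ord1. Qed.

Lemma compev (g : {mpoly R[m]}) x : (g \mPo pitup pi).@[x] = g.@[hilbert_map pi x].
Proof. by rewrite comp_mpoly_meval; apply: meval_eq => i; rewrite tnth_mktuple. Qed.

Lemma main_aux :
  ((forall z : 'I_m -> R,
      (exists x : 'I_n -> R, hilbert_map pi x =1 z) <->
      (in_VR_IPi pi z /\ psd (map_mx (phi_z pi z) (MPi pi))))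
   <->
   (forall phi : {mpoly R[n]} -> R, inv_ring_hom G phi ->
      ((exists psi : {rmorphism {mpoly R[n]} -> R},
          forall f, G_invariant G f -> psi f = phi f)
       <-> (forall f, G_invariant G f -> 0 <= phi (dprod f f))))).
Proof.
have Minv i j : G_invariant G (dprod (pi i) (pi j)).
  by apply: inv_dprod; case: Hpi.
have repr f : G_invariant G f -> exists h, f = h \mPo pitup pi.
  by case: Hpi => _ _ H _; apply: H.
split.
- move=> Hi phi hphi.
  pose z := fun i => phi (pi i).
  have zV : in_VR_IPi pi z.
    by move=> g hg; rewrite -phi_comp // hg -mpolyC0 (phiC hphi).
  have evz f : G_invariant G f -> phi_z pi z f = phi f.
    by move=> /repr [h ->]; rewrite phiz_eq // phi_comp.
  have Meq : map_mx phi (MPi pi) = map_mx (phi_z pi z) (MPi pi).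
    by apply/matrixP => i j; rewrite !mxE evz.
  split.
  + case=> psi Hpsi f hf.
    pose x := fun j => psi 'X_j.
    have hx : hilbert_map pi x =1 z.
      move=> i; rewrite /hilbert_map /z -Hpsi; first by rewrite [RHS]psi_eval.
      by case: Hpi.
    have [_ Hpsd] := (Hi z).1 (ex_intro _ x hx).
    case: (repr f hf) => g ->.
    rewrite quadform //= Meq; apply: Hpsd.
  + move=> Hnn.
    have Hpsd : psd (map_mx (phi_z pi z) (MPi pi)).
      move=> v; rewrite -Meq.
      have := Hnn _ (inv_comp (\sum_(j < m) v j 0 *: 'X_j)).
      by rewrite quadform //= lin_w.
    have [x hx] := (Hi z).2 (conj zV Hpsd).
    exists (GRing.RMorphism.clone _ _ (meval x) _).
    move=> f /repr [h ->]; rewrite /= compev phi_comp //.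
    by apply: meval_eq => i; rewrite hx.
- move=> Hii z; split.
  + case=> x hx.
    have zV : in_VR_IPi pi z.
      by move=> g hg; rewrite -(meval_eq g hx) -compev hg meval0.
    split => //.
    have hom : inv_ring_hom G (meval x).
      split; [exact: meval1 | by move=> f g _ _; rewrite mevalD | by move=> f g _ _; rewrite mevalM].
    have Hnn := (Hii _ hom).1 (ex_intro _ (GRing.RMorphism.clone _ _ (meval x) _) (fun f _ => erefl)).
    have Meq : map_mx (meval x) (MPi pi) = map_mx (phi_z pi z) (MPi pi).
      apply/matrixP => i j; rewrite !mxE.
      have [h ->] := repr _ (Minv i j).
      by rewrite phiz_eq // compev; apply: meval_eq.
    move=> v; rewrite -Meq.
    have := Hnn _ (inv_comp (\sum_(j < m) v j 0 *: 'X_j)).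
    by rewrite quadform //= lin_w.
  + case=> zV Hpsd.
    pose phi := phi_z pi z.
    have hom : inv_ring_hom G phi.
      split.
      * by have := phiz_eq zV 1; rewrite comp_mpoly1 meval1.
      * move=> f g /repr [h1 ->] /repr [h2 ->].
        by rewrite /phi -comp_mpolyD !phiz_eq // mevalD.
      * move=> f g /repr [h1 ->] /repr [h2 ->].
        by rewrite /phi -rmorphM !phiz_eq // mevalM.
    have Zeq i : phi (pi i) = z i by rewrite /phi -compX phiz_eq // mevalXU.
    have Hnn : forall f, G_invariant G f -> 0 <= phi (dprod f f).
      move=> f /repr [h ->]; rewrite quadform //=; apply: Hpsd.
    have [psi Hpsi] := (Hii _ hom).2 Hnn.
    exists (fun j => psi 'X_j) => i.
    rewrite /hilbert_map -psi_eval Hpsi ?Zeq //.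
    by case: Hpi.
Qed.

End Main.
End Gen.

Unset Implicit Arguments.

Theorem proposition2p7 (R : realType) (n m : nat) (G : seq 'M[R]_n)
    (pi : 'I_m -> {mpoly R[n]}) :
  finite_orthogonal_group G ->
  fundamental_invariants G pi ->
  ((forall z : 'I_m -> R,
      (exists x : 'I_n -> R, hilbert_map pi x =1 z) <->
      (in_VR_IPi pi z /\ psd (map_mx (phi_z pi z) (MPi pi))))
   <->
   (forall phi : {mpoly R[n]} -> R, inv_ring_hom G phi ->
      ((exists psi : {rmorphism {mpoly R[n]} -> R},
          forall f, G_invariant G f -> psi f = phi f)
       <-> (forall f, G_invariant G f -> 0 <= phi (dprod f f))))).
Proof. move=> HG Hpi; exact: (main_aux HG Hpi). Qed.
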